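(* Every almost zero-dimensional space that is rim-$\sigma$C is zero-dimensional.
   Context: All spaces are separable and metrizable. A subset $A$ of $X$ is a C-set in $X$ if it is an intersection of clopen subsets of $X$; a $\sigma$C-set is a countable union of C-sets. $X$ is almost zero-dimensional if every point has a neighborhood basis consisting of C-sets in $X$. For a property P, $X$ is rim-P if $X$ has a basis of open sets whose boundaries have property P; rim-$\sigma$C means the boundaries are $\sigma$C-sets in $X$. *)

(* Defs.v *)
(* separable metrizable spaces modelled as separable metric spaces. *)
From Stdlib Require Import Reals.
Open Scope R_scope.

Record MetricSpace := {
  carrier :> Type;
  dist : carrier -> carrier -> R;
  dist_nonneg : forall x y, 0 <= dist x y;
  dist_eq0 : forall x y, dist x y = 0 <-> x = y;
  dist_sym : forall x y, dist x y = dist y x;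
  dist_tri : forall x y z, dist x z <= dist x y + dist y z
}.

Section Topo.
Variable X : MetricSpace.

Definition ball (x : X) (e : R) : X -> Prop := fun y => dist X x y < e.

Definition is_open (U : X -> Prop) : Prop :=
  forall x, U x -> exists e, 0 < e /\ forall y, ball x e y -> U y.

Definition is_closed (A : X -> Prop) : Prop := is_open (fun x => ~ A x).

Definition clopen (A : X -> Prop) : Prop := is_open A /\ is_closed A.

Definition closure (A : X -> Prop) : X -> Prop :=
  fun x => forall e, 0 < e -> exists y, A y /\ dist X x y < e.

Definition interior (A : X -> Prop) : X -> Prop :=
  fun x => exists e, 0 < e /\ forall y, ball x e y -> A y.

Definition boundary (A : X -> Prop) : X -> Prop :=
  fun x => closure A x /\ ~ interior A x.

Definition countable_set (D : X -> Prop) : Prop :=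
  exists f : X -> nat, forall x y, D x -> D y -> f x = f y -> x = y.

Definition separable : Prop :=
  exists D : X -> Prop, countable_set D /\
    forall x e, 0 < e -> exists y, D y /\ dist X x y < e.

Definition C_set (A : X -> Prop) : Prop :=
  exists F : (X -> Prop) -> Prop,
    (forall C, F C -> clopen C) /\
    (forall x, A x <-> forall C, F C -> C x).

Definition sigmaC_set (A : X -> Prop) : Prop :=
  exists An : nat -> X -> Prop,
    (forall n, C_set (An n)) /\
    (forall x, A x <-> exists n, An n x).

Definition neighborhood (N : X -> Prop) (x : X) : Prop :=
  exists U, is_open U /\ U x /\ forall y, U y -> N y.

Definition almost_zero_dim : Prop :=
  forall x U, is_open U -> U x ->
    exists N, C_set N /\ neighborhood N x /\ forall y, N y -> U y.

Definition is_basis (B : (X -> Prop) -> Prop) : Prop :=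
  (forall V, B V -> is_open V) /\
  (forall x U, is_open U -> U x -> exists V, B V /\ V x /\ forall y, V y -> U y).

Definition rim_sigmaC : Prop :=
  exists B, is_basis B /\ forall V, B V -> sigmaC_set (boundary V).

Definition zero_dim : Prop :=
  exists B, is_basis B /\ forall V, B V -> clopen V.

End Topo.

(* Main.v *)
Require Import Defs.
From Stdlib Require Import Reals.
From Stdlib Require Import Lra Lia Classical ClassicalEpsilon IndefiniteDescription Cantor.
Open Scope R_scope.

Lemma dist_self (X : MetricSpace) (x : X) : Defs.dist X x x = 0.
Proof. apply Defs.dist_eq0. reflexivity. Qed.

Lemma Rmin_pos' a b : 0 < a -> 0 < b -> 0 < Rmin a b.
Proof. intros; unfold Rmin; destruct Rle_dec; lra. Qed.

Lemma is_open_ext (X : MetricSpace) (A B : X -> Prop) :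
  (forall x, A x <-> B x) -> Defs.is_open X A -> Defs.is_open X B.
Proof.
  intros H HA x Bx. destruct (HA x (proj2 (H x) Bx)) as [e [he Hb]].
  exists e; split; auto. intros y Hy; apply H; auto.
Qed.

Lemma clopen_compl (X : MetricSpace) (C : X -> Prop) :
  Defs.clopen X C -> Defs.clopen X (fun z => ~ C z).
Proof.
  intros [Co Cc]. split.
  - exact Cc.
  - unfold Defs.is_closed. eapply is_open_ext; [|exact Co].
    intros x; simpl; split; [tauto | apply NNPP].
Qed.

Lemma clopen_empty (X : MetricSpace) : Defs.clopen X (fun _ => False).
Proof.
  split.
  - intros x [].
  - intros x _. exists 1; split; [lra|]. intros y _ [].
Qed.

Lemma C_set_ext (X : MetricSpace) (A B : X -> Prop) :
  (forall x, A x <-> B x) -> Defs.C_set X A -> Defs.C_set X B.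
Proof.
  intros H [F [HF HA]]. exists F; split; auto.
  intros x. rewrite <- H. apply HA.
Qed.

Lemma C_set_empty (X : MetricSpace) : Defs.C_set X (fun _ => False).
Proof.
  exists (fun C => C = (fun _ => False)). split.
  - intros C ->. apply clopen_empty.
  - intros x; split; [intros []|]. intros H. exact (H _ eq_refl).
Qed.

Lemma C_set_union (X : MetricSpace) (A B : X -> Prop) :
  Defs.C_set X A -> Defs.C_set X B -> Defs.C_set X (fun z => A z \/ B z).
Proof.
  intros [FA [HFA HA]] [FB [HFB HB]].
  exists (fun C => exists C1 C2, FA C1 /\ FB C2 /\ C = fun z => C1 z \/ C2 z).
  split.
  - intros C [C1 [C2 [H1 [H2 ->]]]].
    destruct (HFA _ H1) as [O1 K1]. destruct (HFB _ H2) as [O2 K2].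
    split.
    + intros x [Hx|Hx].
      * destruct (O1 x Hx) as [e [he Hb]]. exists e; split; auto.
      * destruct (O2 x Hx) as [e [he Hb]]. exists e; split; auto.
    + intros x Hx.
      assert (n1 : ~ C1 x) by tauto. assert (n2 : ~ C2 x) by tauto.
      destruct (K1 x n1) as [e1 [he1 Hb1]]. destruct (K2 x n2) as [e2 [he2 Hb2]].
      exists (Rmin e1 e2); split; [apply Rmin_pos'; auto|].
      intros y Hy [Hy1|Hy2].
      * apply (Hb1 y); auto. unfold Defs.ball in *. pose proof (Rmin_l e1 e2); lra.
      * apply (Hb2 y); auto. unfold Defs.ball in *. pose proof (Rmin_r e1 e2); lra.
  - intros x; split.
    + intros Hx C [C1 [C2 [H1 [H2 ->]]]].
      destruct Hx as [Hx|Hx]; [left; apply (proj1 (HA x)); auto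
                              | right; apply (proj1 (HB x)); auto].
    + intros H. apply NNPP. intros Hn.
      assert (na : ~ A x) by tauto. assert (nb : ~ B x) by tauto.
      rewrite HA in na. rewrite HB in nb.
      apply not_all_ex_not in na. destruct na as [C1 na].
      apply not_all_ex_not in nb. destruct nb as [C2 nb].
      assert (f1 : FA C1) by (apply NNPP; intro; apply na; intro; contradiction).
      assert (f2 : FB C2) by (apply NNPP; intro; apply nb; intro; contradiction).
      assert (c1 : ~ C1 x) by (intro; apply na; auto).
      assert (c2 : ~ C2 x) by (intro; apply nb; auto).
      destruct (H (fun z => C1 z \/ C2 z)) as [h|h]; eauto 6.
Qed.

Lemma least_nat (Q : nat -> Prop) : (exists j, Q j) -> exists j, Q j /\ forall i, (i < j)%nat -> ~ Q i.
Proof.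
  intros [j Hj]. revert Hj. induction j as [j IH] using (well_founded_induction Wf_nat.lt_wf). intros Hj.
  destruct (classic (exists i, (i < j)%nat /\ Q i)) as [[i [hi qi]]|hn].
  - exact (IH i hi qi).
  - exists j; split; auto. intros i hi qi; apply hn; eauto.
Qed.

Lemma finite_avoid (X : MetricSpace) (Q : nat -> X -> Prop) (z : X) (j : nat) :
  (forall i, (i < j)%nat -> Defs.is_closed X (Q i)) -> (forall i, (i < j)%nat -> ~ Q i z) ->
  exists e, 0 < e /\ forall w, Defs.ball X z e w -> forall i, (i < j)%nat -> ~ Q i w.
Proof.
  induction j as [|j IH]; intros Hc Hn.
  - exists 1; split; [lra|]. intros w _ i hi; lia.
  - destruct IH as [e1 [he1 H1]]; auto.
    destruct (Hc j ltac:(lia) z (Hn j ltac:(lia))) as [e2 [he2 H2]].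
    exists (Rmin e1 e2); split; [apply Rmin_pos'; auto|].
    intros w Hw i hi.
    destruct (Nat.eq_dec i j) as [->|ne].
    + apply H2. unfold Defs.ball in *. pose proof (Rmin_r e1 e2); lra.
    + apply H1; [|lia]. unfold Defs.ball in *. pose proof (Rmin_l e1 e2); lra.
Qed.

Lemma lindelof (X : MetricSpace) (S : X -> Prop) (Good : (X -> Prop) -> Prop) :
  Defs.separable X -> Good (fun _ => False) ->
  (forall y, S y -> exists G, Good G /\ exists e, 0 < e /\ forall z, Defs.ball X y e z -> G z) ->
  exists G : nat -> X -> Prop, (forall j, Good (G j)) /\
    forall y, S y -> exists j e, 0 < e /\ forall z, Defs.ball X y e z -> G j z.
Proof.
  intros [D [[f finj] dense]] Gemp Hcov.
  set (cond := fun (n m : nat) (G : X -> Prop) => Good G /\ exists d, D d /\ f d = n /\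
                 forall z, Defs.ball X d (/ INR m) z -> G z).
  set (Pr := fun (p : nat * nat) (G : X -> Prop) =>
              Good G /\ ((exists G', cond (fst p) (snd p) G') -> cond (fst p) (snd p) G)).
  assert (ex : forall p, exists G, Pr p G).
  { intros p. destruct (classic (exists G', cond (fst p) (snd p) G')) as [[G' HG']|hn].
    - exists G'. split; [apply HG'|]. auto.
    - exists (fun _ => False). split; auto. intros h; contradiction. }
  exists (fun j => epsilon (inhabits (fun _ : X => False)) (Pr (of_nat j))).
  split.
  - intros j. exact (proj1 (epsilon_spec _ _ (ex (of_nat j)))).
  - intros y Sy. destruct (Hcov y Sy) as [G0 [g0 [e [he Hb]]]].
    destruct (archimed_cor1 (e / 2)) as [m [hm m0]]; [lra|].
    assert (rpos : 0 < / INR m) by (apply Rinv_0_lt_compat; apply lt_0_INR; lia).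
    destruct (dense y (/ INR m) rpos) as [d [Dd hd]].
    assert (c0 : cond (f d) m G0).
    { split; auto. exists d; repeat split; auto. intros z Hz. apply Hb.
      unfold Defs.ball in *. pose proof (Defs.dist_tri X y d z). lra. }
    exists (to_nat (f d, m)).
    pose proof (epsilon_spec (inhabits (fun _ : X => False)) _ (ex (of_nat (to_nat (f d, m))))) as HP.
    set (G := epsilon _ _) in HP |- *.
    rewrite cancel_of_to in HP. simpl in HP.
    destruct HP as [_ HP]. destruct (HP (ex_intro _ G0 c0)) as [_ [d' [Dd' [fd' Hd']]]].
    assert (d' = d) by (apply finj; auto). subst d'.
    exists (/ INR m - Defs.dist X d y). split.
    + rewrite Defs.dist_sym. simpl in *. lra.
    + intros z Hz. apply Hd'. unfold Defs.ball in *. pose proof (Defs.dist_tri X d y z).  simpl in *. lra.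
Qed.

Lemma separate (X : MetricSpace) (A M : X -> Prop) :
  Defs.separable X -> Defs.C_set X A -> Defs.C_set X M -> (forall y, A y -> M y -> False) ->
  exists P, Defs.clopen X P /\ (forall y, A y -> P y) /\ (forall y, P y -> M y -> False).
Proof.
  intros sep HA HM disj.
  destruct (lindelof X (fun _ => True)
     (fun G => Defs.clopen X G /\ ((forall y, G y -> ~ A y) \/ (forall y, G y -> ~ M y))) sep)
    as [G [Ggood Gcov]].
  - split; [apply clopen_empty|]. left; intros y [].
  - intros y _.
    assert (key : forall B : X -> Prop, Defs.C_set X B -> ~ B y ->
              exists G, (Defs.clopen X G /\ forall z, G z -> ~ B z) /\
                exists e, 0 < e /\ forall z, Defs.ball X y e z -> G z).
    { intros B [F [HF HB]] nb. rewrite HB in nb. apply not_all_ex_not in nb.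
      destruct nb as [C nb].
      assert (fc : F C) by (apply NNPP; intro; apply nb; intro; contradiction).
      assert (cy : ~ C y) by (intro; apply nb; auto).
      exists (fun z => ~ C z). split.
      - split; [apply clopen_compl; auto|]. intros z hz bz. apply hz.
        apply (proj1 (HB z)); auto.
      - destruct (proj2 (HF C fc) y cy) as [e [he Hb]]. exists e; split; auto. }
    destruct (classic (A y)) as [ay|nay].
    + assert (nm : ~ M y) by (intro; eapply disj; eauto).
      destruct (key M HM nm) as [G0 [[c h] b]]. exists G0; split; auto.
    + destruct (key A HA nay) as [G0 [[c h] b]]. exists G0; split; auto.
  - set (T := fun j z => G j z /\ forall i, (i < j)%nat -> ~ G i z).
    set (Mj := fun j => forall w, G j w -> ~ M w).
    assert (Tin : forall z, exists j, T j z).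
    { intros z. destruct (Gcov z I) as [j [e [he Hb]]].
      destruct (least_nat (fun j => G j z)) as [j' [h1 h2]].
      - exists j. apply Hb. unfold Defs.ball. rewrite dist_self. auto.
      - exists j'. split; auto. }
    assert (Tuniq : forall j j' z, T j z -> T j' z -> j = j').
    { intros j j' z [h1 h2] [h1' h2'].
      destruct (Nat.lt_total j j') as [lt|[eq|gt]]; auto.
      - exfalso; apply (h2' j lt h1).
      - exfalso; apply (h2 j' gt h1'). }
    assert (Topen : forall j z, T j z -> exists e, 0 < e /\ forall w, Defs.ball X z e w -> T j w).
    { intros j z [h1 h2].
      destruct (proj1 (proj1 (Ggood j)) z h1) as [e1 [he1 H1]].
      destruct (finite_avoid X G z j) as [e2 [he2 H2]]; auto.
      { intros i _. exact (proj2 (proj1 (Ggood i))). }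
      exists (Rmin e1 e2); split; [apply Rmin_pos'; auto|].
      intros w Hw. split.
      - apply H1. unfold Defs.ball in *. pose proof (Rmin_l e1 e2); lra.
      - apply H2. unfold Defs.ball in *. pose proof (Rmin_r e1 e2); lra. }
    exists (fun z => exists j, T j z /\ Mj j). split; [split|split].
    + intros z [j [tj mj]]. destruct (Topen j z tj) as [e [he Hb]].
      exists e; split; auto. intros w hw. exists j; split; auto.
    + intros z nz. destruct (Tin z) as [j tj].
      destruct (Topen j z tj) as [e [he Hb]].
      exists e; split; auto. intros w hw [j' [tj' mj']].
      assert (j = j') by (apply (Tuniq j j' w); auto). subst j'.
      apply nz. exists j; split; auto.
    + intros y ay. destruct (Tin y) as [j tj]. exists j; split; auto.
      destruct (proj2 (Ggood j)) as [h|h]; auto.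
      exfalso. exact (h y (proj1 tj) ay).
    + intros y [j [tj mj]] my. exact (mj y (proj1 tj) my).
Qed.

Lemma fun_choice_nat (X : Type) (Q : nat -> X -> Prop) :
  (forall k, exists P, Q k P) -> exists P : nat -> X, forall k, Q k (P k).
Proof.
  intros H. exists (fun k => proj1_sig (constructive_indefinite_description _ (H k))).
  intros k. exact (proj2_sig (constructive_indefinite_description _ (H k))).
Qed.

Theorem corollary4p5 (X : MetricSpace) :
  Defs.separable X -> almost_zero_dim X -> rim_sigmaC X -> zero_dim X.
Proof.
  intros sep azd [B [[Bopen Bbasis] Bsig]].
  exists (fun W => Defs.clopen X W). split; [split|].
  3: { intros V h; exact h. }
  - intros V [Vo _]; exact Vo.
  - intros x U Uo Ux.
    destruct (Bbasis x U Uo Ux) as [V [BV [Vx VU]]].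
    pose proof (Bopen V BV) as Vo.
    destruct (Bsig V BV) as [An [AnC Aniff]].
    destruct (lindelof X V (fun N => Defs.C_set X N /\ forall z, N z -> V z) sep)
      as [N [Ngood Ncov]].
    { split; [apply C_set_empty|]. intros z []. }
    { intros y Vy. destruct (azd y V Vo Vy) as [N0 [C0 [[U' [U'o [U'y U'N]]] N0V]]].
      exists N0; split; [split; auto|].
      destruct (U'o y U'y) as [e [he Hb]]. exists e; split; auto. }
    destruct (Ncov x Vx) as [j0 [e0 [he0 Hb0]]].
    set (M := fun k y => exists j, (j <= k)%nat /\ N j y).
    assert (MC : forall k, Defs.C_set X (M k)).
    { induction k as [|k IH].
      - eapply C_set_ext; [|exact (proj1 (Ngood 0%nat))].
        intros y; split.
        + intros h; exists 0%nat; split; auto.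
        + intros [j [hj h]]. assert (j = 0%nat) by lia. subst; auto.
      - eapply C_set_ext; [|exact (C_set_union X _ _ IH (proj1 (Ngood (S k))))].
        intros y; split.
        + intros [[j [hj h]]|h]; [exists j; split; auto | exists (S k); split; auto].
        + intros [j [hj h]]. destruct (Nat.eq_dec j (S k)) as [->|ne].
          * right; auto.
          * left; exists j; split; auto; lia. }
    assert (MV : forall k y, M k y -> V y).
    { intros k y [j [_ h]]. exact (proj2 (Ngood j) y h). }
    assert (bdV : forall y, Defs.boundary X V y -> ~ V y).
    { intros y [_ ni] vy. apply ni. apply Vo; auto. }
    assert (exP : forall k, exists P, Defs.clopen X P /\ (forall y, An k y -> P y) /\
                                     (forall y, P y -> M (k + j0)%nat y -> False)).
    { intros k. apply separate; auto.
      intros y ay my. apply (bdV y).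
      - apply Aniff. exists k; auto.
      - eapply MV; eauto. }
    destruct (fun_choice_nat _ _ exP) as [P HP].
    exists (fun y => V y /\ forall k, ~ P k y).
    assert (xM : forall k, M (k + j0)%nat x).
    { intros k. exists j0; split; [lia|]. apply Hb0. unfold Defs.ball. rewrite dist_self; auto. }
    split; [split|split].
    + intros y [Vy Py].
      destruct (Ncov y Vy) as [j [e1 [he1 H1]]].
      destruct (Vo y Vy) as [e2 [he2 H2]].
      destruct (finite_avoid X P y j) as [e3 [he3 H3]].
      { intros i _. exact (proj2 (proj1 (HP i))). }
      { intros i _. auto. }
      exists (Rmin e2 (Rmin e1 e3)). split; [repeat apply Rmin_pos'; auto|].
      intros w Hw. unfold Defs.ball in Hw.
      pose proof (Rmin_l e2 (Rmin e1 e3)). pose proof (Rmin_r e2 (Rmin e1 e3)).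
      pose proof (Rmin_l e1 e3). pose proof (Rmin_r e1 e3).
      split.
      * apply H2. unfold Defs.ball; lra.
      * intros k. destruct (Compare_dec.lt_dec k j) as [lt|ge].
        -- apply H3; auto. unfold Defs.ball; lra.
        -- intros pk. apply (proj2 (proj2 (HP k)) w pk).
           exists j; split; [lia|]. apply H1. unfold Defs.ball; lra.
    + intros y ny.
      destruct (classic (exists k, P k y)) as [[k pk]|nk].
      * destruct (proj1 (proj1 (HP k)) y pk) as [e [he Hb]].
        exists e; split; auto. intros w hw [_ h]. exact (h k (Hb w hw)).
      * assert (nv : ~ V y).
        { intros vy. apply ny. split; auto. intros k pk; apply nk; eauto. }
        assert (ncl : ~ Defs.closure X V y).
        { intros cl. assert (bd : Defs.boundary X V y).
          { split; auto. intros [e [he Hb]]. apply nv. apply Hb.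
            unfold Defs.ball; rewrite dist_self; auto. }
          apply Aniff in bd. destruct bd as [n an].
          apply nk. exists n. apply (proj1 (proj2 (HP n))); auto. }
        unfold Defs.closure in ncl. apply not_all_ex_not in ncl. destruct ncl as [e ncl].
        apply imply_to_and in ncl. destruct ncl as [he ncl].
        exists e; split; auto. intros w hw [vw _]. apply ncl. exists w; split; auto.
    + split; auto. intros k pk. exact (proj2 (proj2 (HP k)) x pk (xM k)).
    + intros y [vy _]. auto.
Qed.
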